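(* Let $W$ be a $\beta$-decomposable matrix and let $A$ be a positive semi-definite matrix whose diagonal entries are upper bounded by $\alpha$. Then $W\otimes A$ is $(\alpha\cdot\beta)$-decomposable.
   Context: For an $n\times m$ matrix $W$, $\mathrm{sym}(W)=\begin{bmatrix}0 & W\\ W^T & 0\end{bmatrix}$; $W$ is $\beta$-decomposable if there exist PSD matrices $P,N$ with $\mathrm{sym}(W)=P-N$ and $P_{ii},N_{ii}\le\beta$ for all $i$. $\otimes$ denotes the tensor (Kronecker) product: for $A\in M_{n\times m}$, $B\in M_{k\times l}$, $A\otimes B$ is the $(nk)\times(ml)$ block matrix with blocks $A_{i,j}B$. *)

(* Defs.v *)
From mathcomp Require Import all_boot all_order all_algebra.
From mathcomp Require Import all_reals.
From mathcomp.real_closed Require Export mxtens.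
Set Implicit Arguments. Unset Strict Implicit. Unset Printing Implicit Defensive.
Import Order.TTheory GRing.Theory Num.Theory.
Local Open Scope ring_scope.

Definition psd (R : realType) (n : nat) (M : 'M[R]_n) : Prop :=
  M^T = M /\ forall x : 'cV[R]_n, 0 <= (x^T *m M *m x) ord0 ord0.

Definition symmx (R : realType) (n m : nat) (W : 'M[R]_(n, m)) : 'M[R]_(n + m) :=
  block_mx 0 W W^T 0.

Definition decomposable (R : realType) (n m : nat) (beta : R) (W : 'M[R]_(n, m)) : Prop :=
  exists P N : 'M[R]_(n + m),
    [/\ psd P, psd N, symmx W = P - N &
        forall i, P i i <= beta /\ N i i <= beta].

(* Main.v *)
Require Import Defs.
From mathcomp Require Import all_boot all_order all_algebra.
From mathcomp Require Import all_reals.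
From mathcomp.real_closed Require Import mxtens.
From mathcomp Require Import ring lra.
Import Order.TTheory GRing.Theory Num.Theory.
Local Open Scope ring_scope.
Set Implicit Arguments. Unset Strict Implicit. Unset Printing Implicit Defensive.

Section Aux.
Variable R : realType.

Lemma psd_congr p q (M : 'M[R]_p) (S : 'M[R]_(p, q)) :
  psd M -> psd (S^T *m M *m S).
Proof.
case=> sM qM; split.
  by rewrite !trmx_mul trmxK sM mulmxA.
move=> x; have := qM (S *m x).
by rewrite trmx_mul !mulmxA.
Qed.

Lemma psd_gram p q (B : 'M[R]_(p, q)) : psd (B^T *m B).
Proof.
split; first by rewrite trmx_mul trmxK.
move=> x; rewrite !mulmxA -trmx_mul -mulmxA mxE.
apply: sumr_ge0 => i _; rewrite mxE; exact: mul_self_ge0 || (rewrite -expr2; exact: sqr_ge0).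
Qed.

Definition bil n (A : 'M[R]_n) (x y : 'cV[R]_n) := (x^T *m A *m y) ord0 ord0.

Lemma bilDl n (A : 'M[R]_n) x y z : bil A (x + y) z = bil A x z + bil A y z.
Proof. by rewrite /bil linearD /= !mulmxDl mxE. Qed.
Lemma bilDr n (A : 'M[R]_n) x y z : bil A z (x + y) = bil A z x + bil A z y.
Proof. by rewrite /bil !mulmxDr mxE. Qed.
Lemma bilZl n (A : 'M[R]_n) t x z : bil A (t *: x) z = t * bil A x z.
Proof. by rewrite /bil linearZ /= -!scalemxAl mxE. Qed.
Lemma bilZr n (A : 'M[R]_n) t x z : bil A z (t *: x) = t * bil A z x.
Proof. by rewrite /bil -!scalemxAr mxE. Qed.
Lemma bil_delta n (A : 'M[R]_n) i j : bil A (delta_mx i 0) (delta_mx j 0) = A i j.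
Proof. by rewrite /bil (@trmx_delta R n 1 i 0) -(rowE i A) -(colE j (row i A)) !mxE. Qed.
Lemma bilC n (A : 'M[R]_n) x y : A^T = A -> bil A x y = bil A y x.
Proof.
move=> sA; rewrite /bil.
have -> : (y^T *m A *m x) = (x^T *m A *m y)^T by rewrite !trmx_mul trmxK sA mulmxA.
by rewrite [RHS]mxE.
Qed.

Lemma bil_exp n (A : 'M[R]_n) x e t :
  bil A (x + t *: e) (x + t *: e) =
  bil A x x + t * bil A x e + t * bil A e x + t * t * bil A e e.
Proof. rewrite bilDl !bilDr !bilZl !bilZr; ring. Qed.

Lemma psd_diag n (A : 'M[R]_n) i : psd A -> 0 <= A i i.
Proof. by case=> _ qA; rewrite -bil_delta; apply: qA. Qed.

Lemma psd_sym n (A : 'M[R]_n) i j : psd A -> A j i = A i j.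
Proof. by case=> sA _; rewrite -{1}sA mxE. Qed.

Lemma psd_off n (A : 'M[R]_n) i j : psd A -> A i i = 0 -> A i j = 0.
Proof.
move=> pA Aii; have [sA qA] := pA.
apply/eqP; apply: contraT => nz.
set c := A i j; set d := A j j.
set t := - (d + 1) / (2 * c).
have := qA (delta_mx j 0 + t *: delta_mx i 0).
rewrite -/(bil A _ _) bil_exp !bil_delta Aii (psd_sym _ _ pA) -/c -/d.
have e : t * c = - (d + 1) / 2 by rewrite /t; field; rewrite nz.
lra.
Qed.

Lemma psd_zero n (A : 'M[R]_n) : psd A -> (forall j, A j j = 0) ->
  exists p (B : 'M[R]_(p, n)), A = B^T *m B.
Proof.
move=> pA z; exists 0%N, 0; apply/matrixP => a b.
by rewrite !mxE big_ord0 (psd_off _ pA (z a)).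
Qed.

Lemma psd_fact n (A : 'M[R]_n) : psd A -> exists p (B : 'M[R]_(p, n)), A = B^T *m B.
Proof.
suff H : forall N (A : 'M[R]_n), psd A -> (#|[set j | A j j != 0%R]| <= N)%N ->
  exists p (B : 'M[R]_(p, n)), A = B^T *m B by move=> pA; exact: H _ _ pA (leqnn _).
elim=> [|N IH] {}A pA.
  move=> c0; apply: psd_zero => // j; apply/eqP; apply: contraT => nz.
  have : (0 < #|[set j | A j j != 0%R]|)%N by apply/card_gt0P; exists j; rewrite inE.
  by move/leq_trans/(_ c0).
move=> cN.
have [/forallP z|/forallPn [i nzi]] := boolP [forall j, A j j == 0].
  by apply: psd_zero => // j; apply/eqP.
have [sA qA] := pA.
set a := A i i.
have a0 : 0 < a by rewrite lt_def nzi psd_diag.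
set c := col i A.
set A' := A - a^-1 *: (c *m c^T).
have cE : forall j, c j 0 = A i j.
  by move=> j; rewrite !mxE (psd_sym _ _ pA).
have A'E : forall j, A' j j = A j j - a^-1 * (A i j * A i j).
  by move=> j; rewrite !mxE big_ord1 !mxE (psd_sym _ _ pA).
have pA' : psd A'.
  split.
    by rewrite /A' linearB /= linearZ /= trmx_mul trmxK sA.
  move=> x.
  set s := bil A (delta_mx i 0) x.
  have -> : (x^T *m A' *m x) ord0 ord0 = bil A x x - a^-1 * (s * s).
    have -> : x^T *m A' *m x = x^T *m A *m x - a^-1 *: ((x^T *m c) *m (c^T *m x)).
      by rewrite /A' mulmxBr mulmxBl -scalemxAr -scalemxAl !mulmxA.
    have hU : (x^T *m c) ord0 ord0 = s by rewrite /s bilC // /bil /c colE mulmxA.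
    have hV : (c^T *m x) ord0 ord0 = s.
      by rewrite /s /bil /c colE trmx_mul (@trmx_delta R n 1 i 0) sA.
    have hX : (x^T *m A *m x) ord0 ord0 = bil A x x by [].
    move: hU hV hX; move: (x^T *m c) (c^T *m x) (x^T *m A *m x) => U V X hU hV hX.
    by rewrite !mxE big_ord1 hX hU hV.
  have := qA (x + (- (s / a)) *: delta_mx i 0).
  rewrite -/(bil A _ _) bil_exp bil_delta -/a -/s (bilC _ _ sA) -/s.
  have -> : bil A x x + - (s / a) * s + - (s / a) * s + - (s / a) * - (s / a) * a
          = bil A x x - a^-1 * (s * s) by field; rewrite gt_eqF.
  by [].
have [p [B' eB']] : exists p (B : 'M[R]_(p, n)), A' = B^T *m B.
  apply: IH => //.
  apply: leq_trans (_ : (#|[set j | A j j != 0%R] :\ i| <= N)%N).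
    apply: subset_leq_card; apply/subsetP => j; rewrite !inE A'E => nzj.
    apply/andP; split.
      by apply: contraNneq nzj => ->; rewrite -/a mulKf ?subrr // gt_eqF.
    by apply: contraNneq nzj => z; have := psd_off i pA z; rewrite (psd_sym _ _ pA) => ->; rewrite z mulr0 mulr0 subrr.
  by move: cN; rewrite (cardsD1 i) inE nzi.
exists (1 + p)%N, (col_mx ((Num.sqrt a)^-1 *: c)^T B').
rewrite tr_col_mx mul_row_col trmxK -eB' -scalemxAl linearZ /= -scalemxAr scalerA.
rewrite -invrM ?unitfE ?sqrtr_eq0 -?ltNge // -expr2 sqr_sqrtr ?ltW //.
by rewrite /A' addrC subrK.
Qed.
Lemma psd_tens n k (P : 'M[R]_n) (A : 'M[R]_k) : psd P -> psd A -> psd (P *t A).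
Proof.
move=> /psd_fact [p [C ->]] /psd_fact [q [B ->]].
by rewrite -tensmx_mul -trmx_tens; apply: psd_gram.
Qed.

Lemma psd_sub p q (f : 'I_q -> 'I_p) (M : 'M[R]_p) : psd M -> psd (mxsub f f M).
Proof.
move=> pM.
have -> : mxsub f f M = (colsub f 1%:M)^T *m M *m colsub f 1%:M.
  rewrite mulmx_colsub mulmx1 trmx_mxsub trmx1 mul_rowsub_mx mul1mx.
  by rewrite mxsubcr.
exact: psd_congr.
Qed.

Definition fidx n m k (u : 'I_(n * k + m * k)) : 'I_((n + m) * k) :=
  match split u with
  | inl i => mxtens_index (lshift m (mxtens_unindex i).1, (mxtens_unindex i).2)
  | inr j => mxtens_index (rshift n (mxtens_unindex j).1, (mxtens_unindex j).2)
  end.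

Lemma unsplitl p q (x : 'I_p) : unsplit (inl x : 'I_p + 'I_q) = lshift q x.
Proof. by []. Qed.
Lemma unsplitr p q (x : 'I_q) : unsplit (inr x : 'I_p + 'I_q) = rshift p x.
Proof. by []. Qed.

Lemma fidxl n m k i a :
  @fidx n m k (lshift (m * k) (mxtens_index (i, a))) = mxtens_index (lshift m i, a).
Proof.
rewrite /fidx -unsplitl unsplitK.
by rewrite mxtens_indexK.
Qed.

Lemma fidxr n m k i a :
  @fidx n m k (rshift (n * k) (mxtens_index (i, a))) = mxtens_index (rshift n i, a).
Proof.
rewrite /fidx -unsplitr unsplitK.
by rewrite mxtens_indexK.
Qed.

Lemma symmx_tens n m k (W : 'M[R]_(n, m)) (A : 'M[R]_k) : A^T = A ->
  symmx (W *t A) = mxsub (@fidx n m k) (@fidx n m k) (symmx W *t A).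
Proof.
move=> sA; apply/matrixP => u v; rewrite [RHS]mxE /symmx.
rewrite -(splitK u) -(splitK v).
case: (split u) => i; case: (split v) => j;
  case: (mxtens_indexP i) => i0 a; case: (mxtens_indexP j) => j0 b;
  rewrite ?unsplitl ?unsplitr ?fidxl ?fidxr tensmxE.
- by rewrite (block_mxEul 0 (W *t A)) block_mxEul !mxE mul0r.
- by rewrite (block_mxEur 0 (W *t A)) block_mxEur tensmxE.
- by rewrite (block_mxEdl 0 (W *t A)) block_mxEdl trmx_tens tensmxE sA.
- by rewrite (block_mxEdr 0 (W *t A)) block_mxEdr !mxE mul0r.
Qed.
End Aux.

Unset Implicit Arguments. Set Strict Implicit.

Theorem proposition1 (R : realType) (n m k : nat) (alpha beta : R)
    (W : 'M[R]_(n, m)) (A : 'M[R]_k) :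
  decomposable beta W ->
  psd A ->
  (forall i, A i i <= alpha) ->
  decomposable (alpha * beta) (tensmx W A).
Proof.
move=> [P [N [pP pN eW hPN]]] pA hA.
exists (mxsub (@fidx n m k) (@fidx n m k) (P *t A)),
       (mxsub (@fidx n m k) (@fidx n m k) (N *t A)).
split.
- by apply: psd_sub; apply: psd_tens.
- by apply: psd_sub; apply: psd_tens.
- rewrite symmx_tens; last by case: pA.
  by rewrite eW; apply/matrixP => u v; rewrite !mxE mulrBl.
move=> u; rewrite ![mxsub _ _ _ u u]mxE; case: (mxtens_indexP (fidx u)) => i a; rewrite !tensmxE.
have [hP hN] := hPN i.
have h0 := psd_diag a pA; have h1 := psd_diag i pP; have h2 := psd_diag i pN.
by rewrite [alpha * beta]mulrC; split; apply: ler_pM.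
Qed.
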